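(* Let $K\subset\mathbb R^m$ be a smooth cone, $A:\mathbb R^n\to\mathbb R^m$ linear, $b\in\mathbb R^m$, with $S=\{x: Ax+b\in K\}\neq\emptyset$, and assume $\{0\}\neq\operatorname{Im}A\cap K\subset\operatorname{bd}K$. Then: (i) if $\dim(\operatorname{Im}A)\neq1$ and $b\in\operatorname{Im}A$, then $\mathrm{ACQ}(S)$ does not hold and the inclusion $Ax+b\in K$ has no global error bound; (ii) if $\dim(\operatorname{Im}A)\neq1$ and $b\notin\operatorname{Im}A$, then $\mathrm{ACQ}(S)$ holds but the inclusion has no global error bound; (iii) if $\dim(\operatorname{Im}A)=1$, then the inclusion has a global error bound.
   Context: $\mathrm{ACQ}(S)$ means $A^*[N_K(Ax+b)]=N_S(x)$ for all $x\in S$, where $A^*$ is the adjoint and $N_D(x)$ the normal cone of a convex set. A global error bound means there is $\alpha>0$ with $d(x,S)\le\alpha\,d(Ax+b,K)$ for all $x\in\mathbb R^n$, $d(x,D)=\inf_{y\in D}\|x-y\|$. A cone is regular if pointed, closed, convex, with nonempty interior. A regular cone $C$ is smooth if every boundary point lies on an extreme ray of $C$ (a ray $\{\lambda x:\lambda\ge0\}$, $x\ne0$, which is a face of $C$) and, for every non-zero point $x$ of any extreme ray, $N_C(x)$ has dimension one. *)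

(* Defs.v *)
From HB Require Import structures.
From mathcomp Require Import all_boot all_order all_algebra.
From mathcomp Require Import classical_sets reals.
Set Implicit Arguments. Unset Strict Implicit. Unset Printing Implicit Defensive.
Import Order.TTheory GRing.Theory Num.Theory.
Local Open Scope ring_scope.
Local Open Scope classical_set_scope.

Section Defs.
Variable R : realType.

Definition dot n (u v : 'cV[R]_n) : R := \sum_(i < n) u i 0 * v i 0.
Definition enorm n (u : 'cV[R]_n) : R := Num.sqrt (dot u u).

Definition dist n (x : 'cV[R]_n) (D : set 'cV[R]_n) : R :=
  inf [set enorm (x - y) | y in D].

Definition convex_set n (C : set 'cV[R]_n) : Prop :=
  forall x y t, C x -> C y -> 0 <= t -> t <= 1 -> C (t *: x + (1 - t) *: y).

Definition is_cone n (C : set 'cV[R]_n) : Prop :=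
  forall x t, C x -> 0 <= t -> C (t *: x).

Definition pointed n (C : set 'cV[R]_n) : Prop :=
  forall x, C x -> C (- x) -> x = 0.

Definition closure_pt n (C : set 'cV[R]_n) (x : 'cV[R]_n) : Prop :=
  forall e : R, 0 < e -> exists2 y, C y & enorm (x - y) < e.

Definition closed_set n (C : set 'cV[R]_n) : Prop :=
  forall x, closure_pt C x -> C x.

Definition interior_pt n (C : set 'cV[R]_n) (x : 'cV[R]_n) : Prop :=
  exists2 e : R, 0 < e & forall y, enorm (y - x) < e -> C y.

Definition boundary n (C : set 'cV[R]_n) : set 'cV[R]_n :=
  [set x | closure_pt C x /\ ~ interior_pt C x].

Definition regular_cone n (C : set 'cV[R]_n) : Prop :=
  [/\ is_cone C, pointed C, closed_set C, convex_set C &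
      exists x, interior_pt C x].

(* normal cone of a convex set D at x (empty if x is not in D) *)
Definition normal_cone n (D : set 'cV[R]_n) (x : 'cV[R]_n) : set 'cV[R]_n :=
  [set v | D x /\ forall y, D y -> dot v (y - x) <= 0].

Definition face n (C F : set 'cV[R]_n) : Prop :=
  [/\ F `<=` C, convex_set F &
      forall x y t, C x -> C y -> 0 < t -> t < 1 ->
        F (t *: x + (1 - t) *: y) -> F x /\ F y].

Definition ray n (d : 'cV[R]_n) : set 'cV[R]_n :=
  [set l *: d | l in [set l : R | 0 <= l]].

Definition extreme_ray n (C : set 'cV[R]_n) (d : 'cV[R]_n) : Prop :=
  d != 0 /\ face C (ray d).

Definition dim_one n (N : set 'cV[R]_n) : Prop :=
  (exists2 w, N w & w != 0) /\
  exists2 v, v != 0 & N `<=` [set t *: v | t in [set: R]].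

Definition smooth_cone n (C : set 'cV[R]_n) : Prop :=
  [/\ regular_cone C,
      (forall x, boundary C x -> exists2 d, extreme_ray C d & ray d x) &
      (forall d x, extreme_ray C d -> ray d x -> x != 0 ->
         dim_one (normal_cone C x))].

Definition feas m n (A : 'M[R]_(m, n)) (b : 'cV[R]_m) (K : set 'cV[R]_m)
  : set 'cV[R]_n := [set x | K (A *m x + b)].

Definition ACQ m n (A : 'M[R]_(m, n)) (b : 'cV[R]_m) (K : set 'cV[R]_m) : Prop :=
  forall x, feas A b K x ->
    [set A^T *m v | v in normal_cone K (A *m x + b)] = normal_cone (feas A b K) x.

Definition global_error_bound m n (A : 'M[R]_(m, n)) (b : 'cV[R]_m)
  (K : set 'cV[R]_m) : Prop :=
  exists2 alpha : R, 0 < alpha &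
    forall x, dist x (feas A b K) <= alpha * dist (A *m x + b) K.

Definition imA m n (A : 'M[R]_(m, n)) : set 'cV[R]_m := [set A *m x | x in [set: 'cV[R]_n]].

End Defs.

(* Main.v *)
From HB Require Import structures.
From mathcomp Require Import all_boot all_order all_algebra.
From mathcomp Require Import boolp classical_sets reals topology normedtype derive.
From mathcomp Require Import ring lra.
Require Import Defs.
Set Implicit Arguments. Unset Strict Implicit. Unset Printing Implicit Defensive.
Import Order.TTheory GRing.Theory Num.Theory.
Local Open Scope ring_scope.
Local Open Scope classical_set_scope.

Module BasicsM.
Import numFieldNormedType.Exports.

Section Basics.
Variable R : realType.
Implicit Types (k : nat).

Lemma dotE k (u v : 'cV[R]_k) : dot u v = (u^T *m v) 0 0.
Proof. rewrite /dot mxE; apply: eq_bigr => i _; by rewrite mxE. Qed.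

Lemma dotC k (u v : 'cV[R]_k) : dot u v = dot v u.
Proof. rewrite /dot; apply: eq_bigr => i _; by rewrite mulrC. Qed.

Lemma dotDl k (u v w : 'cV[R]_k) : dot (u + v) w = dot u w + dot v w.
Proof. rewrite /dot -big_split /=; apply: eq_bigr => i _; by rewrite mxE mulrDl. Qed.

Lemma dotZl k a (u w : 'cV[R]_k) : dot (a *: u) w = a * dot u w.
Proof. rewrite /dot mulr_sumr; apply: eq_bigr => i _; by rewrite mxE mulrA. Qed.

Lemma dotNl k (u w : 'cV[R]_k) : dot (- u) w = - dot u w.
Proof. by rewrite -scaleN1r dotZl mulN1r. Qed.

Lemma dotBl k (u v w : 'cV[R]_k) : dot (u - v) w = dot u w - dot v w.
Proof. by rewrite dotDl dotNl. Qed.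

Lemma dotDr k (u v w : 'cV[R]_k) : dot w (u + v) = dot w u + dot w v.
Proof. by rewrite dotC dotDl !(dotC w). Qed.

Lemma dotZr k a (u w : 'cV[R]_k) : dot w (a *: u) = a * dot w u.
Proof. by rewrite dotC dotZl dotC. Qed.

Lemma dotNr k (u w : 'cV[R]_k) : dot w (- u) = - dot w u.
Proof. by rewrite dotC dotNl dotC. Qed.

Lemma dotBr k (u v w : 'cV[R]_k) : dot w (u - v) = dot w u - dot w v.
Proof. by rewrite dotDr dotNr. Qed.

Lemma dot0l k (w : 'cV[R]_k) : dot 0 w = 0.
Proof. by rewrite -(scale0r 0) dotZl mul0r. Qed.

Lemma dot0r k (w : 'cV[R]_k) : dot w 0 = 0.
Proof. by rewrite dotC dot0l. Qed.

Lemma dot_ge0 k (u : 'cV[R]_k) : 0 <= dot u u.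
Proof. by apply: sumr_ge0 => i _; rewrite -expr2 sqr_ge0. Qed.

Lemma dot_eq0 k (u : 'cV[R]_k) : dot u u = 0 -> u = 0.
Proof.
move=> h; apply/matrixP => i j; rewrite (ord1 j) mxE.
have hp : forall l, xpredT l -> 0 <= u l 0 * u l 0 by move=> l _; rewrite -expr2 sqr_ge0.
have := @psumr_eq0P R _ xpredT (fun i => u i 0 * u i 0) hp h i isT.
by move/eqP; rewrite mulf_eq0 orbb => /eqP.
Qed.

Lemma dotmul m1 n1 (A : 'M[R]_(m1, n1)) v x : dot (A^T *m v) x = dot v (A *m x).
Proof. by rewrite !dotE trmx_mul trmxK mulmxA. Qed.

Lemma enorm_ge0 k (u : 'cV[R]_k) : 0 <= enorm u.
Proof. exact: sqrtr_ge0. Qed.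

Lemma enorm_sq k (u : 'cV[R]_k) : enorm u ^+ 2 = dot u u.
Proof. by rewrite /enorm sqr_sqrtr // dot_ge0. Qed.

Lemma enorm_eq0 k (u : 'cV[R]_k) : enorm u = 0 -> u = 0.
Proof. by move=> h; apply: dot_eq0; rewrite -enorm_sq h expr0n. Qed.

Lemma enorm0 k : enorm (0 : 'cV[R]_k) = 0.
Proof. by rewrite /enorm dot0l sqrtr0. Qed.

Lemma enormZ k a (u : 'cV[R]_k) : enorm (a *: u) = `|a| * enorm u.
Proof.
by rewrite /enorm dotZl dotZr mulrA -expr2 sqrtrM ?sqr_ge0 // sqrtr_sqr.
Qed.

Lemma enormN k (u : 'cV[R]_k) : enorm (- u) = enorm u.
Proof. by rewrite -scaleN1r enormZ normrN1 mul1r. Qed.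

Lemma enormB k (u v : 'cV[R]_k) : enorm (u - v) = enorm (v - u).
Proof. by rewrite -enormN opprB. Qed.

Lemma sq_le_le (x y : R) : 0 <= y -> x ^+ 2 <= y ^+ 2 -> x <= y.
Proof.
move=> y0 h; have [x0|x0] := lerP x 0; first exact: le_trans x0 y0.
by rewrite -(ler_pXn2r (isT : (0 < 2)%N)) // ?nnegrE ltW.
Qed.

Lemma CS k (u v : 'cV[R]_k) : dot u v <= enorm u * enorm v.
Proof.
have [u0|] := eqVneq (enorm u) 0.
  by rewrite (enorm_eq0 u0) dot0l enorm0 mul0r.
have [v0|] := eqVneq (enorm v) 0.
  by rewrite (enorm_eq0 v0) dot0r enorm0 mulr0.
move=> nv nu; have pu : 0 < enorm u by rewrite lt_neqAle eq_sym nu enorm_ge0.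
have pv : 0 < enorm v by rewrite lt_neqAle eq_sym nv enorm_ge0.
have h := dot_ge0 (enorm v *: u - enorm u *: v).
rewrite !(dotBl, dotBr, dotZl, dotZr) -!enorm_sq (dotC v u) in h.
have p2 : 0 < 2 * (enorm u * enorm v) by rewrite mulr_gt0 // mulr_gt0.
rewrite -(ler_pM2l p2); nra.
Qed.

Lemma CSabs k (u v : 'cV[R]_k) : `|dot u v| <= enorm u * enorm v.
Proof.
rewrite ler_norml CS andbT lerNl -dotNl -(enormN u); exact: CS.
Qed.

Lemma enormD k (u v : 'cV[R]_k) : enorm (u + v) <= enorm u + enorm v.
Proof.
apply: sq_le_le; first by rewrite addr_ge0 ?enorm_ge0.
rewrite enorm_sq !(dotDl, dotDr) (dotC v u) sqrrD -!enorm_sq.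
have := CS u v; nra.
Qed.

Lemma enormB_tri k (u v w : 'cV[R]_k) : enorm (u - w) <= enorm (u - v) + enorm (v - w).
Proof. by have := enormD (u - v) (v - w); rewrite addrA subrK. Qed.

Lemma coord_le k (u : 'cV[R]_k) i : `|u i 0| <= enorm u.
Proof.
apply: sq_le_le; first exact: enorm_ge0.
rewrite enorm_sq /dot (bigD1 i) //= real_normK ?num_real // lerDl.
by apply: sumr_ge0 => j _; rewrite -expr2 sqr_ge0.
Qed.

Lemma enorm_le_sum k (u : 'cV[R]_k) : enorm u <= \sum_i `|u i 0|.
Proof.
apply: sq_le_le; first by apply: sumr_ge0.
rewrite enorm_sq /dot expr2 mulr_suml; apply: ler_sum => i _.
rewrite mulr_sumr (bigD1 i) //= -normrM -{1}[u i 0 * u i 0]ger0_norm.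
  rewrite ler_wpDr // ?sumr_ge0 // => j _; by rewrite mulr_ge0.
by rewrite -expr2 sqr_ge0.
Qed.



Lemma rnorm_coord k (r : 'rV[R]_k) i : `|r 0 i| <= `|r|.
Proof.
rewrite [leRHS]/Num.Def.normr /= mx_normrE; apply/bigmax_geP; right => /=.
by exists (ord0, i).
Qed.

Lemma enorm_tr_le k (r : 'rV[R]_k) : enorm (r^T) <= k%:R * `|r|.
Proof.
apply: le_trans (enorm_le_sum _) _.
have -> : k%:R * `|r| = \sum_(i < k) `|r| by rewrite sumr_const card_ord mulr_natl.
by apply: ler_sum => i _; rewrite mxE rnorm_coord.
Qed.

Lemma rnorm_le k (r : 'rV[R]_k) : `|r| <= enorm r^T.
Proof.
rewrite [leLHS]/Num.Def.normr /= mx_normrE; apply: bigmax_le; first exact: enorm_ge0.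
move=> [i j] _ /=; rewrite (ord1 i).
by have := coord_le (r^T) j; rewrite mxE.
Qed.

Lemma min_attained k (C : set 'cV[R]_k) (f : 'cV[R]_k -> R) (L B : R) :
  C !=set0 -> closed_set C -> (forall x, C x -> enorm x <= B) ->
  0 <= L -> (forall x y, `|f x - f y| <= L * enorm (x - y)) ->
  exists2 c, C c & forall x, C x -> f c <= f x.
Proof.
move=> [c0 Cc0] clC bC L0 lipf.
pose A' := [set r : 'rV[R]_k | C r^T].
pose g := fun r : 'rV[R]_k => f r^T.
have cA : compact A'.
  apply: bounded_closed_compact.
    exists B; split; first exact: num_real.
    move=> M BM x Ax; apply: le_trans (rnorm_le x) _.
    by apply: le_trans (bC _ Ax) (ltW BM).
  move=> r hr; apply: clC => e e0.
  have kp : 0 < k%:R + 1 :> R by rewrite ltr_pwDr // ler0n.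
  have := hr (ball r (e / (k%:R + 1))).
  case; first by apply: nbhsx_ballx; rewrite divr_gt0.
  move=> s [As]; rewrite -ball_normE /= => hs.
  exists s^T => //; rewrite -linearB /=.
  apply: le_lt_trans (enorm_tr_le _) _.
  rewrite ltr_pdivlMr // mulrDr mulr1 in hs.
  have t0 : 0 <= `|r - s| by [].
  rewrite [X in X < _]mulrC; lra.
have ne : A' !=set0 by exists c0^T; rewrite /A' /= trmxK.
have cg : {within A', continuous g}.
  apply: continuous_subspaceT => r.
  move=> s /nbhs_ballP [e e0 es]; apply/nbhs_ballP.
  have kp : 0 < L * k%:R + 1 by rewrite ltr_pwDr // mulr_ge0 // ler0n.
  exists (e / (L * k%:R + 1)); first by rewrite /= divr_gt0.
  move=> r' hr'; apply: es; move: hr'; rewrite -!ball_normE /= => hr'.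
  rewrite ltr_pdivlMr // mulrDr mulr1 in hr'.
  apply: le_lt_trans (lipf _ _) _; rewrite -linearB /=.
  apply: le_lt_trans (_ : L * enorm (r - r')^T <= L * (k%:R * `|r - r'|)) _.
    by rewrite ler_wpM2l // enorm_tr_le.
  have t0 : 0 <= `|r - r'| by [].
  have : 0 <= L * k%:R * `|r - r'| by rewrite !mulr_ge0 // ler0n.
  rewrite mulrA; lra.
have [c Ac hc] := compact_EVT_min ne cA cg.
exists c^T; first by rewrite inE in Ac.
move=> x Cx; have := hc x^T; rewrite /g trmxK; apply; by rewrite inE /A' /= trmxK.
Qed.

End Basics.

End BasicsM.
Import BasicsM.

Section P3.
Variable R : realType.
Implicit Types (k : nat).

Lemma dist_le k (D : set 'cV[R]_k) x y : D y -> dist x D <= enorm (x - y).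
Proof.
move=> Dy; rewrite /dist; apply: ge_inf; last by exists y.
by exists 0 => _ [z _ <-]; exact: enorm_ge0.
Qed.

Lemma dist_ge k (D : set 'cV[R]_k) x c : D !=set0 ->
  (forall y, D y -> c <= enorm (x - y)) -> c <= dist x D.
Proof.
move=> [y Dy] h; apply: lb_le_inf; first by exists (enorm (x - y)), y.
by move=> _ [z Dz <-]; exact: h.
Qed.

Lemma dist_ge0 k (D : set 'cV[R]_k) x : D !=set0 -> 0 <= dist x D.
Proof. by move=> D0; apply: dist_ge => // y _; exact: enorm_ge0. Qed.

Lemma dist_lt k (D : set 'cV[R]_k) x e : D !=set0 -> dist x D < e ->
  exists2 y, D y & enorm (x - y) < e.
Proof.
move=> [y0 Dy0] h; have [] := inf_lt _ h; first by exists (enorm (x - y0)), y0.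
by move=> _ [y Dy <-] hy; exists y.
Qed.

Lemma dist_lip k (D : set 'cV[R]_k) x z : D !=set0 ->
  dist x D <= enorm (x - z) + dist z D.
Proof.
move=> D0; rewrite -lerBlDl; apply: dist_ge => // y Dy; rewrite lerBlDl.
exact: le_trans (dist_le x Dy) (enormB_tri x z y).
Qed.

Lemma dist_lipabs k (D : set 'cV[R]_k) x z : D !=set0 ->
  `|dist x D - dist z D| <= 1 * enorm (x - z).
Proof.
move=> D0; rewrite mul1r ler_norml; have := dist_lip x z D0.
have := dist_lip z x D0; rewrite enormB; lra.
Qed.

Lemma enorm_lip k (z : 'cV[R]_k) x y : `|enorm (x - z) - enorm (y - z)| <= 1 * enorm (x - y).
Proof.
rewrite mul1r ler_norml; have := enormB_tri x y z; have := enormB_tri y x z.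
rewrite (enormB y x); lra.
Qed.

Lemma enorm_lip' k (z : 'cV[R]_k) x y : `|enorm (z - x) - enorm (z - y)| <= 1 * enorm (x - y).
Proof. by rewrite (enormB z x) (enormB z y); exact: enorm_lip. Qed.

Lemma dot_lip k (u : 'cV[R]_k) x y : `|dot u x - dot u y| <= enorm u * enorm (x - y).
Proof. by rewrite -dotBr; exact: CSabs. Qed.

Lemma closed_lip k (f : 'cV[R]_k -> R) L c : 0 <= L ->
  (forall x y, `|f x - f y| <= L * enorm (x - y)) -> closed_set [set x | f x <= c].
Proof.
move=> L0 lip x hx; rewrite /=; rewrite leNgt; apply/negP => cx.
have e0 : 0 < (f x - c) / (L + 1) by rewrite divr_gt0 ?subr_gt0 // ltr_pwDr.
have [y fy hy] := hx _ e0.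
have hy2 : enorm (x - y) * (L + 1) < f x - c by rewrite -ltr_pdivlMr // ltr_pwDr.
move: hy2; rewrite mulrDr mulr1 mulrC => {}hy.
have := lip x y; rewrite ler_norml => /andP[_].
have := enorm_ge0 (x - y); rewrite /= in fy; lra.
Qed.

Lemma closedI k (A B : set 'cV[R]_k) : closed_set A -> closed_set B -> closed_set (A `&` B).
Proof.
move=> cA cB x hx; split.
  by apply: cA => e e0; have [y [Ay _] h] := hx e e0; exists y.
by apply: cB => e e0; have [y [_ By] h] := hx e e0; exists y.
Qed.

Lemma closed_all k (I : Type) (F : I -> set 'cV[R]_k) :
  (forall i, closed_set (F i)) -> closed_set [set x | forall i, F i x].
Proof.
move=> cF x hx i; apply: cF => e e0; have [y Fy h] := hx e e0; by exists y.
Qed.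

Lemma opbound m1 n1 (A : 'M[R]_(m1, n1)) :
  exists2 C, 0 < C & forall x, enorm (A *m x) <= C * enorm x.
Proof.
exists (1 + \sum_i \sum_j `|A i j|).
  by rewrite ltr_pwDl // sumr_ge0 // => i _; rewrite sumr_ge0.
move=> x; apply: le_trans (enorm_le_sum _) _.
apply: le_trans (_ : _ <= (\sum_i \sum_j `|A i j|) * enorm x) _; last first.
  by rewrite ler_wpM2r ?enorm_ge0 // lerDr.
rewrite mulr_suml; apply: ler_sum => i _; rewrite mxE mulr_suml.
apply: le_trans (ler_norm_sum _ _ _) _; apply: ler_sum => j _.
by rewrite normrM ler_wpM2l // coord_le.
Qed.

Lemma nearest k (K : set 'cV[R]_k) x : K !=set0 -> closed_set K ->
  exists2 p, K p & forall y, K y -> enorm (x - p) <= enorm (x - y).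
Proof.
move=> [y0 Ky0] cK.
pose C := K `&` [set y | enorm (x - y) <= enorm (x - y0)].
have C0 : C !=set0 by exists y0; rewrite /C /=; split.
have cC : closed_set C.
  apply: closedI => //; apply: (closed_lip (L:=1)) => //; exact: enorm_lip'.
have bC : forall y, C y -> enorm y <= enorm x + enorm (x - y0).
  move=> y [_ /= hy]; have := enormB_tri y x 0; rewrite !subr0 (enormB y x); lra.
have [] := @min_attained _ k C (fun y => enorm (x - y)) 1 _ C0 cC bC ler01 (enorm_lip' x).
move=> p [Kp hp] hmin; exists p => // y Ky.
have [le|lt] := lerP (enorm (x - y)) (enorm (x - y0)).
  by apply: hmin; split.
by apply: le_trans hp (ltW lt).
Qed.

Lemma nearest_dist k (K : set 'cV[R]_k) x p : K p ->
  (forall y, K y -> enorm (x - p) <= enorm (x - y)) -> dist x K = enorm (x - p).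
Proof.
move=> Kp h; apply/eqP; rewrite eq_le dist_le //=; apply: dist_ge => //.
by exists p.
Qed.

Lemma sqexp k (u v : 'cV[R]_k) t :
  dot (u - t *: v) (u - t *: v) = dot u u - 2 * t * dot u v + t ^+ 2 * dot v v.
Proof. rewrite !(dotBl, dotBr, dotZl, dotZr) (dotC v u); ring. Qed.

Lemma proj_var k (K : set 'cV[R]_k) x p : convex_set K -> K p ->
  (forall y, K y -> enorm (x - p) <= enorm (x - y)) ->
  forall y, K y -> dot (x - p) (y - p) <= 0.
Proof.
move=> cK Kp hp y Ky; rewrite leNgt; apply/negP => apos.
set a := dot (x - p) (y - p); set c := dot (y - p) (y - p).
have c0 : 0 <= c by exact: dot_ge0.
pose t := a / (a + c).
have {}apos : 0 < a := apos.
have ac : 0 < a + c by lra.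
have t0 : 0 <= t by rewrite divr_ge0 // ltW.
have t1 : t <= 1 by rewrite /t ler_pdivrMr // mul1r; lra.
have := hp _ (cK y p t Ky Kp t0 t1).
have -> : x - (t *: y + (1 - t) *: p) = (x - p) - t *: (y - p).
  by rewrite scalerBl scale1r scalerBr; apply/matrixP => i j; rewrite !mxE; ring.
move=> h; have h2 : enorm (x - p) ^+ 2 <= enorm (x - p - t *: (y - p)) ^+ 2.
  by rewrite lerXn2r ?nnegrE ?enorm_ge0.
rewrite !enorm_sq sqexp -/a -/c in h2.
have tc : t * (a + c) = a by rewrite /t divfK ?gt_eqF.
have : 2 * t * a <= t ^+ 2 * c by lra.
rewrite expr2; nra.
Qed.

Lemma proj_cone k (K : set 'cV[R]_k) x p : convex_set K -> is_cone K -> K p ->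
  (forall y, K y -> enorm (x - p) <= enorm (x - y)) ->
  dot (x - p) p = 0 /\ forall y, K y -> dot (x - p) y <= 0.
Proof.
move=> cK coK Kp hp; have hv := proj_var cK Kp hp.
have K0 : K 0 by have := coK p 0 Kp (lexx 0); rewrite scale0r.
have h1 := hv _ K0; have h2 := hv _ (coK p 2 Kp (ler0n _ 2)).
rewrite sub0r dotNr in h1.
have e : 2 *: p - p = p by rewrite scalerDl scale1r addrK.
rewrite e in h2.
have d0 : dot (x - p) p = 0 by lra.
split => // y Ky; have := hv _ Ky; rewrite dotBr d0 subr0 //.
Qed.

Lemma sep k (C : set 'cV[R]_k) q : C !=set0 -> closed_set C -> convex_set C ->
  is_cone C -> ~ C q -> exists h, 0 < dot h q /\ forall c, C c -> dot h c <= 0.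
Proof.
move=> C0 cC cvC coC nq; have [p Cp hp] := nearest q C0 cC.
have [d0 hc] := proj_cone cvC coC Cp hp.
exists (q - p); split => //.
have -> : dot (q - p) q = dot (q - p) (q - p) by rewrite dotBr d0 subr0.
rewrite lt_neqAle dot_ge0 andbT eq_sym; apply/eqP => /dot_eq0 /eqP.
by rewrite subr_eq0 => /eqP qp; apply: nq; rewrite qp.
Qed.

End P3.

Section P5.
Variable R : realType.

Lemma sub_span k (d y : 'cV[R]_k) : (y^T <= d^T)%MS -> exists c, y = c *: d.
Proof.
move/submxP => [D e]; exists (D 0 0).
have -> : y = (y^T)^T by rewrite trmxK.
rewrite e trmx_mul trmxK; apply/matrixP => i j.
by rewrite (ord1 j) !mxE big_ord1 !mxE mulrC.
Qed.

Lemma imA_sub m n (A : 'M[R]_(m, n)) y : imA A y -> (y^T <= A^T)%MS.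
Proof. by move=> [x _ <-]; rewrite trmx_mul submxMl. Qed.

Lemma rank1_span m n (A : 'M[R]_(m, n)) d : imA A d -> d != 0 -> \rank A = 1%N ->
  forall y, imA A y -> exists c, y = c *: d.
Proof.
move=> dA d0 r1 y yA; apply: sub_span.
have := mxrank_leqif_eq (imA_sub dA).
rewrite rank_rV trmx_eq0 d0 mxrank_tr r1 => /leqif_refl => h.
case/andP: h => _ sA.
exact: submx_trans (imA_sub yA) sA.
Qed.

Lemma not_rank1 m n (A : 'M[R]_(m, n)) d : imA A d -> d != 0 -> \rank A != 1%N ->
  exists x, forall c, A *m x != c *: d.
Proof.
move=> [xd _ exd] d0 r1; apply/not_existsP => hall; apply/negP: r1; rewrite negbK.
have hc : forall x, exists c, A *m x = c *: d.
  move=> x; have := hall x => /existsNP [c /negP]; rewrite negbK => /eqP ->.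
  by exists c.
have sA : (A^T <= d^T)%MS.
  apply/row_subP => j; rewrite -tr_col colE.
  have [c ->] := hc (delta_mx j 0); rewrite linearZ /=.
  by apply: scalemx_sub.
have le1 : (\rank A <= 1)%N.
  by rewrite -mxrank_tr; apply: leq_trans (mxrankS sA) (rank_leq_row _).
have : \rank A != 0%N.
  rewrite mxrank_eq0; apply/eqP => A0; move/eqP: d0; apply.
  by rewrite -exd A0 mul0mx.
by case: (\rank A) le1 => [|[|]].
Qed.

End P5.

Section Cone.
Variables (R : realType) (m : nat) (K : set 'cV[R]_m).
Hypothesis smK : smooth_cone K.

Lemma regK : regular_cone K. Proof. by case: smK. Qed.
Lemma coK : is_cone K. Proof. by case: regK. Qed.
Lemma ptK : pointed K. Proof. by case: regK. Qed.
Lemma clK : closed_set K. Proof. by case: regK. Qed.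
Lemma cvK : convex_set K. Proof. by case: regK. Qed.
Lemma intK : exists x, interior_pt K x. Proof. by case: regK. Qed.

Lemma K0 : K 0.
Proof.
have [x [e e0 he]] := intK.
have Kx : K x by apply: he; rewrite subrr enorm0.
by have := coK Kx (lexx 0); rewrite scale0r.
Qed.

Lemma K_ne : K !=set0. Proof. by exists 0; exact: K0. Qed.

Lemma Kadd x y : K x -> K y -> K (x + y).
Proof.
move=> Kx Ky; have h := cvK Kx Ky (t:=1/2) _ _.
have := coK (h _ _) (ler0n _ 2).
have -> : 2 *: ((1/2) *: x + (1 - 1/2) *: y) = x + y.
  by apply/matrixP => i j; rewrite !mxE; field.
by apply; lra.
Qed.

Lemma Kscale x l : K x -> 0 <= l -> K (l *: x). Proof. exact: coK. Qed.

Lemma not_int_bd x : K x -> ~ interior_pt K x -> boundary K x.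
Proof. by move=> Kx ni; split => // e e0; exists x => //; rewrite subrr enorm0. Qed.

Lemma polar_pt u : (forall y, K y -> dot u y <= 0) -> (forall y, K y -> dot (- u) y <= 0) -> u = 0.
Proof.
move=> h1 h2; have [x0 [e0 e0p he]] := intK.
have Kx0 : K x0 by apply: he; rewrite subrr enorm0.
have z : forall y, K y -> dot u y = 0.
  by move=> y Ky; have := h1 _ Ky; have := h2 _ Ky; rewrite dotNl; lra.
have np : 0 < enorm u + 1 by have := enorm_ge0 u; lra.
pose s := e0 / (enorm u + 1).
have s0 : 0 < s by rewrite divr_gt0.
have Ky : K (x0 + s *: u).
  apply: he; rewrite addrAC subrr add0r enormZ gtr0_norm //.
  rewrite /s mulrAC ltr_pdivrMr // ltr_pM2l //; lra.
have := z _ Ky; rewrite dotDr dotZr z // add0r => /eqP.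
by rewrite mulf_eq0 gt_eqF //= => /eqP /dot_eq0.
Qed.

Lemma face_mid y z : K y -> K z -> boundary K ((1/2) *: y + (1 - 1/2) *: z) ->
  exists g, ray g y /\ ray g z.
Proof.
move=> Ky Kz bm; case: smK => _ hb _.
have [g [g0 [_ _ fc]] hg] := hb _ bm.
exists g; apply: (fc y z (1/2) Ky Kz _ _ hg); lra.
Qed.

Lemma dim_at x : boundary K x -> x != 0 -> dim_one (normal_cone K x).
Proof. by move=> bx x0; case: smK => _ hb hn; have [g eg rg] := hb x bx; exact: hn g x eg rg x0. Qed.

Lemma NK_cone z u : normal_cone K z u ->
  [/\ K z, (forall y, K y -> dot u y <= 0) & dot u z = 0].
Proof.
move=> [Kz h]; have h0 := h _ K0; rewrite sub0r dotNr in h0.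
have h2 := h _ (coK Kz (ler0n _ 2)).
have e : 2 *: z - z = z by rewrite scalerDl scale1r addrK.
rewrite e in h2.
have dz : dot u z = 0 by lra.
split => // y Ky; have := h _ (Kadd Ky Kz); by rewrite addrK.
Qed.

Lemma NK_intro z u : K z -> (forall y, K y -> dot u y <= 0) -> dot u z = 0 ->
  normal_cone K z u.
Proof. by move=> Kz h dz; split => // y Ky; rewrite dotBr dz subr0 h. Qed.

Lemma N_ray d u1 u2 : dim_one (normal_cone K d) -> normal_cone K d u1 ->
  normal_cone K d u2 -> u1 != 0 -> exists2 l, 0 <= l & u2 = l *: u1.
Proof.
move=> [_ [v v0 sub]] n1 n2 u10.
have [a _ e1] := sub _ n1; have [b _ e2] := sub _ n2.
have a0 : a != 0 by apply: contraNneq u10 => a0; rewrite -e1 a0 scale0r.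
have e : u2 = (b / a) *: u1 by rewrite -e1 -e2 scalerA divfK.
have [l0|ln] := lerP 0 (b / a); first by exists (b / a).
exfalso; move/eqP: u10; apply; apply: polar_pt.
  by case: (NK_cone n1).
move=> y Ky; case: (NK_cone n2) => _ h2 _; have := h2 _ Ky.
rewrite e dotZl => h; rewrite dotNl; nra.
Qed.


Lemma normal_approx d w t c0 : K d -> 0 < t -> 0 < c0 -> c0 <= dist (t *: d + w) K ->
  exists u, [/\ enorm u = 1, forall y, K y -> dot u y <= 0, c0 <= dot u w &
                 - dot u d <= enorm w / t].
Proof.
move=> Kd t0 c00 hc.
have [p Kp hp] := nearest (t *: d + w) K_ne clK.
have [dp hcone] := proj_cone cvK coK Kp hp.
rewrite (nearest_dist Kp hp) in hc.
have hpos : 0 < enorm (t *: d + w - p) by lra.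
pose u := (enorm (t *: d + w - p))^-1 *: (t *: d + w - p).
have nu : enorm u = 1 by rewrite enormZ ger0_norm ?invr_ge0 ?ltW // mulVf ?gt_eqF.
have hK : forall y, K y -> dot u y <= 0.
  move=> y Ky; rewrite dotZl; apply: mulr_ge0_le0 (hcone _ Ky).
  by rewrite invr_ge0 ltW.
have duq : dot u (t *: d + w) = enorm (t *: d + w - p).
  have -> : dot u (t *: d + w) = dot u (t *: d + w - p) + dot u p by rewrite dotBr addrNK.
  rewrite !dotZl dp mulr0 addr0 -enorm_sq expr2 mulrA mulVf ?mul1r // gt_eqF //.
rewrite dotDr dotZr in duq.
have ud := hK _ Kd.
have cs := CS u w; rewrite nu mul1r in cs.
exists u; split => //.
  have : t * dot u d <= 0 by rewrite mulr_ge0_le0 // ltW.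
  lra.
rewrite ler_pdivlMr //.
have : - dot u d * t = - (t * dot u d) by rewrite mulNr mulrC.
lra.
Qed.

Lemma limit_normal d w c0 : K d -> 0 < c0 ->
  (forall t, 0 <= t -> c0 <= dist (t *: d + w) K) ->
  exists u, [/\ normal_cone K d u, enorm u = 1 & c0 <= dot u w].
Proof.
move=> Kd c00 hall.
pose C := [set u : 'cV[R]_m | enorm (u - 0) <= 1] `&` [set u | - enorm (u - 0) <= -1] `&`
      [set u | forall y : {y | K y}, dot u (proj1_sig y) <= 0] `&` [set u | - dot u w <= - c0].
have memC : forall u, C u <-> [/\ enorm u = 1, forall y, K y -> dot u y <= 0 & c0 <= dot u w].
  move=> u; rewrite /C /=; split.
    rewrite subr0 => -[[[h1 h2] h3] h4]; split; [lra| |lra].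
    by move=> y Ky; exact: (h3 (exist _ y Ky)).
  move=> [h1 h2 h3]; rewrite subr0 h1; split; [split; [split|]|] => //; last lra.
  by move=> [y Ky]; exact: h2.
have C0 : C !=set0.
  have [u [h1 h2 h3 _]] := normal_approx Kd ltr01 c00 (hall 1 ler01).
  by exists u; apply/memC.
have cC : closed_set C.
  rewrite /C; apply: closedI; [apply: closedI; [apply: closedI|]|].
  - by apply: (closed_lip (L:=1)) => // x y; exact: enorm_lip.
  - apply: (closed_lip (L:=1)) => // x y; rewrite -opprD normrN.
    exact: enorm_lip.
  - apply: closed_all => y; apply: (closed_lip (L := enorm (proj1_sig y))).
      exact: enorm_ge0.
    by move=> x z; rewrite dotC (dotC z); exact: dot_lip.
  - apply: (closed_lip (L := enorm w)); first exact: enorm_ge0.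
    move=> x z.
    by rewrite -opprD normrN (dotC x) (dotC z); exact: dot_lip.
have bC : forall u, C u -> enorm u <= 1 by move=> u /memC [-> _ _].
have lipf : forall x y, `|(- dot x d) - (- dot y d)| <= enorm d * enorm (x - y).
  by move=> x y; rewrite -opprD normrN dotC (dotC y); exact: dot_lip.
have [u /memC [h1 h2 h3] hmin] := @min_attained _ m C (fun u => - dot u d) (enorm d) 1 C0 cC bC
  (enorm_ge0 d) lipf.
  exists u; split => //; apply: NK_intro => //.
  apply/eqP; rewrite eq_le h2 //=; rewrite leNgt; apply/negP => neg.
  have dw : 0 < (enorm w + 1) / (- dot u d) by rewrite divr_gt0 //; [have := enorm_ge0 w; lra | lra].
  have [u' [g1 g2 g3 g4]] := normal_approx Kd dw c00 (hall _ (ltW dw)).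
  have := hmin u' (proj2 (memC u') (And3 g1 g2 g3)).
  move: g4; rewrite invf_div mulrA ler_pdivlMr; last by have := enorm_ge0 w; lra.
  have := enorm_ge0 w.
  move=> nw g4 hm.
  have : - dot u d * (enorm w + 1) <= enorm w * (- dot u d) by nra.
  nra.
Qed.

Lemma tan_contra d w c0 : K d -> dim_one (normal_cone K d) -> 0 < c0 ->
  (forall t, 0 <= t -> c0 <= dist (t *: d + w) K) ->
  (forall t, 0 <= t -> c0 <= dist (t *: d + - w) K) -> False.
Proof.
move=> Kd dd c00 h1 h2.
have [u1 [n1 e1 d1]] := limit_normal Kd c00 h1.
have [u2 [n2 e2 d2]] := limit_normal Kd c00 h2.
have u10 : u1 != 0 by apply/eqP => u0; move: e1; rewrite u0 enorm0; lra.
have [l l0 e] := N_ray dd n1 n2 u10.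
rewrite e dotZl dotNr in d2.
have : 0 <= l * dot u1 w by rewrite mulr_ge0 //; lra.
lra.
Qed.

End Cone.

Section Main.
Variables (R : realType) (m n : nat) (K : set 'cV[R]_m) (A : 'M[R]_(m, n)) (b : 'cV[R]_m).
Hypothesis smK : smooth_cone K.
Hypothesis Sne : feas A b K !=set0.
Hypothesis hbd : imA A `&` K `<=` boundary K.

Lemma imA_lin u v a c : imA A u -> imA A v -> imA A (a *: u + c *: v).
Proof.
move=> [x _ <-] [y _ <-]; exists (a *: x + c *: y) => //.
by rewrite mulmxDr !scalemxAr.
Qed.

Lemma imA_N u : imA A u -> imA A (- u).
Proof. by move=> [x _ <-]; exists (- x) => //; rewrite mulmxN. Qed.

Lemma imAx x : imA A (A *m x). Proof. by exists x. Qed.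

Lemma small_zero (a L : R) : 0 <= L -> (forall e, 0 < e -> `|a| <= L * e) -> a = 0.
Proof.
move=> L0 h; have [//|na] := eqVneq a 0.
have ap : 0 < `|a| by rewrite normr_gt0.
have e0 : 0 < `|a| / (2 * (L + 1)) by rewrite divr_gt0 // mulr_gt0 // ltr_pwDr.
have := h _ e0; rewrite mulrA ler_pdivlMr ?mulr_gt0 ?ltr_pwDr //.
nra.
Qed.

Lemma imA_closed : closed_set (imA A).
Proof.
move=> x hx.
suff : (x^T <= A^T)%MS.
  move/submxP => [D e]; exists D^T => //.
  by rewrite -(trmxK x) e trmx_mul trmxK.
rewrite submxE; apply/eqP/matrixP => i j; rewrite (ord1 i) [RHS]mxE.
pose c := col j (cokermx A^T).
have ex : forall z : 'cV[R]_m, (z^T *m cokermx A^T) 0 j = dot z c.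
  by move=> z; rewrite mxE /dot; apply: eq_bigr => k _; rewrite !mxE.
rewrite ex; apply: (small_zero (enorm_ge0 c)) => e e0.
have [y yA hy] := hx e e0.
have y0 : dot y c = 0.
  by rewrite -ex; move/imA_sub: yA; rewrite submxE => /eqP ->; rewrite mxE.
have -> : dot x c = dot (x - y) c by rewrite dotBl y0 subr0.
apply: le_trans (CSabs _ _) _; rewrite mulrC ler_wpM2l ?enorm_ge0 //; exact: ltW.
Qed.

Lemma dist_shift_scale p0 q l : K p0 -> 0 < l ->
  dist (p0 + l *: q) K <= l * dist q K.
Proof.
move=> Kp l0; rewrite mulrC -ler_pdivrMr //.
apply: dist_ge; first exact: K_ne smK.
move=> y Ky; rewrite ler_pdivrMr //.
apply: le_trans (dist_le _ (Kadd smK Kp (Kscale smK Ky (ltW l0)))) _.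
have -> : p0 + l *: q - (p0 + l *: y) = l *: (q - y).
  by rewrite scalerBr opprD addrACA subrr add0r.
by rewrite enormZ gtr0_norm // mulrC.
Qed.

Lemma ray_struct d : imA A d -> K d -> d != 0 ->
  forall z, imA A z -> K z -> exists2 l, 0 <= l & z = l *: d.
Proof.
move=> dA Kd d0 z zA Kz.
have mA : imA A ((1/2) *: d + (1 - 1/2) *: z) by exact: imA_lin.
have mK : K ((1/2) *: d + (1 - 1/2) *: z).
  by apply: (cvK smK) => //; lra.
have [g [[l l0 el] [l' l'0 el']]] := face_mid smK Kd Kz (hbd (conj mA mK)).
have lnz : l != 0 by apply: contraNneq d0 => l00; rewrite -el l00 scale0r.
exists (l' / l); first by rewrite divr_ge0.
by rewrite -el -el' scalerA divfK.
Qed.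


Lemma key_lb al C d w t : 0 < al -> 0 < C -> (forall x, enorm (A *m x) <= C * enorm x) ->
  (forall x, dist x (feas A b K) <= al * dist (A *m x + b) K) ->
  imA A d -> (forall z, imA A z -> K z -> exists2 l, 0 <= l & z = l *: d) ->
  imA A w -> w != 0 -> dot w d = 0 -> 0 <= t ->
  (enorm w / 2) / (al * C) <= dist (t *: d + w) K.
Proof.
move=> al0 C0 hC heb dA hray wA w0 wd t0.
have qA : imA A (t *: d + w) by rewrite -[w]scale1r; exact: imA_lin.
have [xq _ exq] := qA.
have nw : 0 < enorm w.
  rewrite lt_neqAle enorm_ge0 andbT eq_sym; apply/eqP => /enorm_eq0 /eqP.
  by rewrite (negbTE w0).
pose r := enorm w / 2.
have r0 : 0 < r by rewrite divr_gt0.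
pose Y := imA A `&` [set y | enorm (y - (t *: d + w)) <= r].
have Yq : Y (t *: d + w) by split => //=; rewrite subrr enorm0 ltW.
have cY : closed_set Y.
  apply: closedI; first exact: imA_closed.
  by apply: (closed_lip (L := 1)) => // x y; exact: enorm_lip.
have bY : forall y, Y y -> enorm y <= enorm (t *: d + w) + r.
  move=> y [_ /= hy]; have := enormB_tri y (t *: d + w) 0; rewrite !subr0; lra.
have Kne := K_ne smK.
have [ys [ysA hys] hmin] := @min_attained _ m Y (fun y => dist y K) 1 _ (ex_intro _ _ Yq) cY bY
  ler01 (fun x y => dist_lipabs x y Kne).
rewrite /= in hys.
pose mu := dist ys K.
have mu0 : 0 < mu.
  rewrite lt_neqAle dist_ge0 // andbT; apply/negP => /eqP mu00.
  have Kys : K ys.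
    apply: (clK smK) => e e0; apply: dist_lt => //; by rewrite -/mu -mu00.
  have [l l0 el] := hray _ ysA Kys.
  have : enorm w <= enorm (ys - (t *: d + w)).
    apply: sq_le_le; first exact: enorm_ge0.
    have -> : ys - (t *: d + w) = - w - (t - l) *: d.
      by rewrite el; apply/matrixP => i j; rewrite !mxE; ring.
    rewrite !enorm_sq sqexp !dotNl !dotNr opprK wd oppr0 mulr0 subr0.
    by rewrite lerDl mulr_ge0 ?sqr_ge0 ?dot_ge0.
  rewrite /r in hys; lra.
have [x0 Sx0] := Sne; rewrite /feas /= in Sx0.
pose p0 := A *m x0 + b.
pose l := (enorm p0 + 1) / mu.
have np0 := enorm_ge0 p0.
have l0 : 0 < l by rewrite divr_gt0 //; lra.
pose x := x0 + l *: xq.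
have ex : A *m x + b = p0 + l *: (t *: d + w).
  by rewrite /x mulmxDr -scalemxAr exq /p0 addrAC.
have up := heb x; rewrite ex in up.
have up2 := le_trans up (ler_wpM2l (ltW al0) (dist_shift_scale (t *: d + w) Sx0 l0)).
have low : l * r / C <= dist x (feas A b K).
  apply: dist_ge => // s Ss; rewrite /feas /= in Ss.
  rewrite ler_pdivrMr //.
  apply: le_trans (_ : enorm (A *m (x - s)) <= _); last by rewrite mulrC hC.
  have -> : A *m (x - s) = p0 + l *: (t *: d + w) - (A *m s + b).
    by rewrite -ex mulmxBr opprD addrACA subrr addr0.
  rewrite leNgt; apply/negP => hlt.
  pose y := l^-1 *: (A *m s + b - p0).
  have yA : imA A y.
    exists (l^-1 *: (s - x0)) => //.
    have ex2 : A *m x = p0 + l *: (t *: d + w) - b by rewrite -ex addrK.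
    rewrite -scalemxAr mulmxBr /y /p0; congr (_ *: _); apply/matrixP => i j; rewrite !mxE; ring.
  have hyq : enorm (y - (t *: d + w)) < r.
    have -> : y - (t *: d + w) = l^-1 *: (- (p0 + l *: (t *: d + w) - (A *m s + b))).
      have ln : l != 0 by rewrite gt_eqF.
      by rewrite /y; apply/matrixP => i j; rewrite !mxE; field.
    rewrite enormZ enormN ger0_norm ?invr_ge0 ?ltW // mulrC ltr_pdivrMr //.
    by rewrite mulrC.
  have := hmin y (conj yA (ltW hyq)); rewrite -/mu => hm.
  have Kf : K (l^-1 *: (A *m s + b)) by apply: (Kscale smK) => //; rewrite invr_ge0 ltW.
  have := dist_le y Kf.
  have -> : y - l^-1 *: (A *m s + b) = - (l^-1 *: p0).
    by rewrite /y; apply/matrixP => i j; rewrite !mxE; ring.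
  rewrite enormN enormZ ger0_norm; last by rewrite invr_ge0 ltW.
  have : l^-1 * enorm p0 < mu.
    rewrite /l invf_div mulrAC ltr_pdivrMr; last lra.
    rewrite ltr_pM2l //; lra.
  lra.
have := le_trans low up2.
rewrite -/r ler_pdivrMr // => hh.
rewrite ler_pdivrMr ?mulr_gt0 //.
have e : al * (l * dist (t *: d + w) K) * C = l * (dist (t *: d + w) K * (al * C)) by ring.
by rewrite e ler_pM2l // in hh.
Qed.


Lemma noEB d w : imA A d -> K d -> d != 0 -> imA A w -> w != 0 -> dot w d = 0 ->
  ~ global_error_bound A b K.
Proof.
move=> dA Kd d0 wA w0 wd [al al0 heb].
have [C C0 hC] := opbound A.
have hray := ray_struct dA Kd d0.
have dd : dim_one (normal_cone K d) := dim_at smK (hbd (conj dA Kd)) d0.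
have nw : 0 < enorm w.
  rewrite lt_neqAle enorm_ge0 andbT eq_sym; apply/eqP => /enorm_eq0 /eqP.
  by rewrite (negbTE w0).
have c0 : 0 < (enorm w / 2) / (al * C) by rewrite !divr_gt0 // mulr_gt0.
apply: (tan_contra smK Kd dd c0).
  by move=> t t0; exact: key_lb.
move=> t t0; rewrite -(enormN w); apply: key_lb => //.
- exact: imA_N.
- by rewrite oppr_eq0.
- by rewrite dotNl wd oppr0.
Qed.

Lemma get_w d : imA A d -> d != 0 -> \rank A != 1%N ->
  exists w, [/\ imA A w, w != 0 & dot w d = 0].
Proof.
move=> dA d0 r1; have [x hx] := not_rank1 dA d0 r1.
have dd0 : dot d d != 0 by apply: contraNneq d0 => /dot_eq0 ->.
pose a := dot (A *m x) d / dot d d.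
exists (1 *: (A *m x) + (- a) *: d); split.
- exact: imA_lin (imAx x) dA.
- by rewrite scale1r scaleNr; apply: contra (hx a) => /eqP e; rewrite -subr_eq0 e.
- by rewrite dotDl !dotZl mul1r /a mulNr divfK // subrr.
Qed.

Lemma noACQ d w : imA A b -> imA A d -> K d -> d != 0 -> imA A w -> w != 0 -> dot w d = 0 ->
  ~ ACQ A b K.
Proof.
move=> [xb _ exb] dA Kd d0 wA w0 wd hacq.
have [xd _ exd] := dA; have [xw _ exw] := wA.
have hray := ray_struct dA Kd d0.
have dd : dim_one (normal_cone K d) := dim_at smK (hbd (conj dA Kd)) d0.
pose x0 := - xb.
have z0 : A *m x0 + b = 0 by rewrite /x0 mulmxN exb addNr.
have Sx0 : feas A b K x0 by rewrite /feas /= z0; exact: K0 smK.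
have E := hacq x0 Sx0.
pose v := A^T *m w.
have v0 : v != 0.
  apply/eqP => v00; move/eqP: w0; apply; apply: dot_eq0.
  by rewrite -{2}exw -dotmul -/v v00 dot0l.
have nS : forall c, normal_cone (feas A b K) x0 (c *: v).
  move=> c; split => // y Sy; rewrite dotZl dotmul.
  have -> : A *m (y - x0) = A *m y + b by rewrite mulmxBr /x0 mulmxN opprK exb.
  have yA : imA A (A *m y + b) by rewrite -exb -mulmxDr; exact: imAx.
  have [l _ ->] := hray _ yA Sy.
  by rewrite dotZr wd !mulr0.
have get : forall c, exists2 u, normal_cone K d u & A^T *m u = c *: v.
  move=> c; have := nS c; rewrite -E => -[u hu eu].
  exists u => //; have [_ hK _] := NK_cone smK hu.
  apply: NK_intro => //.
  rewrite -exd -dotmul eu dotZl /v dotmul exd wd mulr0 //.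
have [u nu eu] := get 1; have [u' nu' eu'] := get (-1).
have u0 : u != 0 by apply: contraNneq v0 => u00; rewrite -(scale1r v) -eu u00 mulmx0.
have [l l0 el] := N_ray smK dd nu nu' u0.
move: eu'; rewrite el -scalemxAr eu scale1r => /eqP.
rewrite -subr_eq0 -scalerBl scaler_eq0 (negbTE v0) orbF subr_eq0 => /eqP l1.
by move: l0; rewrite l1 oppr_ge0 ler10.
Qed.

Lemma slater d : ~ imA A b -> imA A d -> K d -> d != 0 ->
  exists h0, interior_pt K (A *m h0 + b).
Proof.
move=> nb dA Kd d0; apply/not_existsP => nint; apply: nb.
have [x0 Sx0] := Sne; rewrite /feas /= in Sx0.
have [xd _ exd] := dA.
pose p := A *m x0 + b.
have KP1 : K (p + d) by apply: (Kadd smK); [exact: Sx0 | exact: Kd].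
have KP3 : K (p + 3%:R *: d) by apply: (Kadd smK); [exact: Sx0 | apply: (Kscale smK) => //; exact: ler0n].
have em : (1/2) *: (p + d) + (1 - 1/2) *: (p + 3%:R *: d) = A *m (x0 + 2%:R *: xd) + b.
  by rewrite mulmxDr -scalemxAr exd /p; apply/matrixP => i j; rewrite !mxE; field.
have Km : K ((1/2) *: (p + d) + (1 - 1/2) *: (p + 3%:R *: d)).
  by apply: (cvK smK) => //; lra.
have bm : boundary K ((1/2) *: (p + d) + (1 - 1/2) *: (p + 3%:R *: d)).
  have := nint (x0 + 2%:R *: xd); rewrite -em => ni; exact: (not_int_bd Km ni).
have [g [[l1 l10 e1] [l3 l30 e3]]] := face_mid smK KP1 KP3 bm.
have e2 : 2%:R *: d = (l3 - l1) *: g.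
  rewrite scalerBl e1 e3; apply/matrixP => i j; rewrite !mxE; ring.
have l31 : l3 - l1 != 0.
  apply: contraNneq d0 => e; move: e2; rewrite e scale0r => /eqP.
  by rewrite scaler_eq0 pnatr_eq0.
have eg : g = (2%:R / (l3 - l1)) *: d by rewrite mulrC -scalerA e2 scalerA mulVf // scale1r.
exists ((2%:R * l1 / (l3 - l1) - 1) *: xd - x0) => //.
rewrite mulmxBr -scalemxAr exd.
have h : p + d = (2%:R * l1 / (l3 - l1)) *: d by rewrite -e1 eg scalerA mulrCA mulrA.
have hp : p = (2%:R * l1 / (l3 - l1) - 1) *: d by rewrite scalerBl scale1r -h addrK.
by rewrite -hp /p addrC addKr.
Qed.

End Main.

Section Clos.
Variable R : realType.

Lemma sub_closure k (P : set 'cV[R]_k) y : P y -> closure_pt P y.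
Proof. by move=> Py e e0; exists y => //; rewrite subrr enorm0. Qed.

Lemma closure_closed k (P : set 'cV[R]_k) : closed_set [set y | closure_pt P y].
Proof.
move=> x hx e e0; have e2 : 0 < e / 2 by rewrite divr_gt0.
have [y hy hxy] := hx _ e2; have [z Pz hyz] := hy _ e2.
exists z => //; apply: le_lt_trans (enormB_tri x y z) _; lra.
Qed.

Lemma closure_convex k (P : set 'cV[R]_k) : convex_set P -> convex_set [set y | closure_pt P y].
Proof.
move=> cP x y t hx hy t0 t1 e e0.
have [x' Px' hx'] := hx _ e0; have [y' Py' hy'] := hy _ e0.
exists (t *: x' + (1 - t) *: y'); first exact: cP.
have -> : t *: x + (1 - t) *: y - (t *: x' + (1 - t) *: y') =
   t *: (x - x') + (1 - t) *: (y - y').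
  by apply/matrixP => i j; rewrite !mxE; ring.
have t1' : 0 <= 1 - t by lra.
apply: le_lt_trans (enormD _ _) _; rewrite !enormZ !ger0_norm //.
have [->|tp] := eqVneq t 0; first by rewrite mul0r add0r subr0 mul1r.
have tp' : 0 < t by rewrite lt_neqAle eq_sym tp t0.
have h1 : t * enorm (x - x') < t * e by rewrite ltr_pM2l.
have h2 : (1 - t) * enorm (y - y') <= (1 - t) * e by rewrite ler_wpM2l // ltW.
have : t * e + (1 - t) * e = e by ring.
lra.
Qed.

Lemma closure_cone k (P : set 'cV[R]_k) : is_cone P -> P 0 -> is_cone [set y | closure_pt P y].
Proof.
move=> cP P0 x t hx t0 e e0.
have [->|tp] := eqVneq t 0; first by exists 0 => //; rewrite scale0r subrr enorm0.
have tp' : 0 < t by rewrite lt_neqAle eq_sym tp t0.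
have [y Py hy] := hx (e / t) (divr_gt0 e0 tp').
exists (t *: y); first exact: cP.
by rewrite -scalerBr enormZ gtr0_norm // mulrC -ltr_pdivlMr.
Qed.

End Clos.

Section ACQS.
Variables (R : realType) (m n : nat) (K : set 'cV[R]_m) (A : 'M[R]_(m, n)) (b : 'cV[R]_m).
Hypothesis smK : smooth_cone K.

Lemma M0_closed x h0 : interior_pt K (A *m h0 + b) -> K (A *m x + b) ->
  closed_set [set A^T *m u | u in normal_cone K (A *m x + b)].
Proof.
move=> [r0 r00 hball] Kz v' hv'.
pose z := A *m x + b.
have [C C0 hC] := opbound A^T.
have bnd : forall u, normal_cone K z u ->
    r0 / 2 * enorm u <= enorm (A^T *m u) * enorm (h0 - x).
  move=> u nu; have [_ hK dz] := NK_cone smK nu.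
  have [->|u0] := eqVneq u 0; first by rewrite enorm0 mulr0 mulmx0 enorm0 mul0r.
  have nu0 : 0 < enorm u.
    by rewrite lt_neqAle enorm_ge0 andbT eq_sym; apply: contra u0 => /eqP/enorm_eq0 ->.
  pose y := A *m h0 + b + (r0 / 2 / enorm u) *: u.
  have Ky : K y.
    apply: hball; rewrite /y addrAC subrr add0r enormZ ger0_norm; last first.
      by rewrite !divr_ge0 ?enorm_ge0 // ltW.
    by rewrite divfK ?gt_eqF //; lra.
  have := hK _ Ky; rewrite /y !dotDr dotZr.
  have -> : dot u (A *m h0) = dot u (A *m (h0 - x)) + dot u (A *m x).
    by rewrite mulmxBr dotBr subrK.
  have ezu : dot u (A *m x) = - dot u b by move: dz; rewrite /z dotDr; lra.
  rewrite ezu -dotmul.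
  have cs := CSabs (A^T *m u) (h0 - x); rewrite ler_norml in cs.
  have : dot u u = enorm u * enorm u by rewrite -expr2 enorm_sq.
  move=> ->; rewrite mulrA divfK ?gt_eqF //.
  case/andP: cs => cs1 _; lra.
pose B := 2 / r0 * ((enorm v' + 1) * enorm (h0 - x)).
have B0 : 0 <= B.
  rewrite /B; apply: mulr_ge0; first by apply: divr_ge0; [lra | exact: ltW].
  by apply: mulr_ge0; [have := enorm_ge0 v'; lra | exact: enorm_ge0].
pose U := normal_cone K z `&` [set u | enorm (u - 0) <= B].
have U0 : U !=set0.
  exists 0; split; last by rewrite /= subr0 enorm0.
  by split => // y Ky; rewrite dot0l.
have cU : closed_set U.
  apply: closedI; last by apply: (closed_lip (L := 1)) => // u1 u2; exact: enorm_lip.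
  have e : normal_cone K z = [set u | forall y : {y | K y}, dot u (proj1_sig y - z) <= 0].
    apply/seteqP; split => u /=; first by move=> [_ h] [y Ky]; exact: h.
    by move=> h; split => // y Ky; exact: (h (exist _ y Ky)).
  rewrite e; apply: closed_all => y; apply: (closed_lip (L := enorm (proj1_sig y - z))).
    exact: enorm_ge0.
  by move=> u1 u2; rewrite dotC (dotC u2); exact: dot_lip.
have bU : forall u, U u -> enorm u <= B by move=> u [_ /=]; rewrite subr0.
have lipg : forall u1 u2, `|enorm (A^T *m u1 - v') - enorm (A^T *m u2 - v')| <= C * enorm (u1 - u2).
  move=> u1 u2; apply: le_trans (enorm_lip _ _ _) _; rewrite mul1r -mulmxBr; exact: hC.
have [us [nus bus] hmin] := @min_attained _ m U (fun u => enorm (A^T *m u - v')) C B U0 cU bU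
  (ltW C0) lipg.
exists us => //.
suff : enorm (A^T *m us - v') = 0 by move/enorm_eq0/eqP; rewrite subr_eq0 => /eqP.
apply/eqP; rewrite eq_le enorm_ge0 andbT; rewrite leNgt; apply/negP => gpos.
set g := enorm (A^T *m us - v') in gpos.
have e0 : 0 < g / (g + 1) by rewrite divr_gt0 //; lra.
have [_ [u nu <-] hu] := hv' _ e0.
have e1 : g / (g + 1) < 1 by rewrite ltr_pdivrMr; lra.
have hu1 : enorm (A^T *m u - v') < 1 by rewrite enormB; lra.
have Uu : U u.
  split => //; rewrite /= subr0; have := bnd u nu.
  have : enorm (A^T *m u) <= enorm v' + 1.
    have := enormB_tri (A^T *m u) v' 0; rewrite !subr0; lra.
  move=> h1 h2.
  have E : enorm u = 2 / r0 * (r0 / 2 * enorm u).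
    have r0n : r0 != 0 by rewrite gt_eqF.
    by field.
  rewrite E /B; apply: ler_wpM2l; first by apply: divr_ge0; [lra | exact: ltW].
  apply: le_trans h2 _; apply: ler_wpM2r; first exact: enorm_ge0.
  exact: h1.
have := hmin u Uu; rewrite -/g.
have e2 : g / (g + 1) < g.
  rewrite ltr_pdivrMr; last lra.
  have : 0 < g * g by rewrite mulr_gt0.
  lra.
rewrite enormB; lra.
Qed.


Lemma P_in_S x v h' k s : (forall y, feas A b K y -> dot v (y - x) <= 0) ->
  K (A *m x + b) -> A *m h' = k - s *: (A *m x + b) -> K k -> 0 <= s -> dot v h' <= 0.
Proof.
move=> hv Kz eh Kk s0.
have s1 : 0 < 1 + s by lra.
pose x' := x + (1 + s)^-1 *: h'.
have ex' : A *m x' + b = (1 + s)^-1 *: (k + (A *m x + b)).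
  rewrite /x' mulmxDr -scalemxAr eh.
  have sn : 1 + s != 0 by rewrite gt_eqF.
  by apply/matrixP => i j; rewrite !mxE; field.
have Sx' : feas A b K x'.
  rewrite /feas /= ex'; apply: (Kscale smK); first exact: (Kadd smK).
  by rewrite invr_ge0 ltW.
have := hv _ Sx'; rewrite /x' addrAC subrr add0r dotZr.
by rewrite pmulr_rle0 // invr_gt0.
Qed.

Lemma ACQ_holds d : feas A b K !=set0 -> ~ imA A b -> imA A d -> K d -> d != 0 -> ACQ A b K.
Proof.
move=> Sne nb dA Kd d0.
have [h0 ih0] := slater smK Sne nb dA Kd d0.
move=> x Sx; rewrite /feas /= in Sx.
apply/seteqP; split.
  move=> _ [u [Kz hu] <-]; split => // y Sy; rewrite dotmul.
  have -> : A *m (y - x) = (A *m y + b) - (A *m x + b).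
    by rewrite mulmxBr; apply/matrixP => i j; rewrite !mxE; ring.
  exact: hu _ Sy.
move=> v [_ hv]; apply: contrapT => nv.
pose z := A *m x + b.
pose M0 := [set A^T *m u | u in normal_cone K z].
have nz0 : normal_cone K z 0 by split => // y _; rewrite dot0l.
have M0ne : M0 !=set0 by exists 0, 0 => //; rewrite mulmx0.
have cM0 : closed_set M0 by exact: M0_closed ih0 Sx.
have cvM0 : convex_set M0.
  move=> _ _ t [u1 [_ n1] <-] [u2 [_ n2] <-] t0 t1.
  exists (t *: u1 + (1 - t) *: u2); last by rewrite mulmxDr -!scalemxAr.
  split => // y Ky; rewrite dotDl !dotZl.
  have := n1 _ Ky; have := n2 _ Ky => a1 a2.
  have : 0 <= 1 - t by lra.
  move=> t1'; have := mulr_ge0_le0 t0 a2; have := mulr_ge0_le0 t1' a1; lra.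
have coM0 : is_cone M0.
  move=> _ t [u [_ n1] <-] t0; exists (t *: u); last by rewrite -scalemxAr.
  by split => // y Ky; rewrite dotZl mulr_ge0_le0 // n1.
have [h [hpos hM]] := sep M0ne cM0 cvM0 coM0 nv.
have hu : forall u, normal_cone K z u -> dot u (A *m h) <= 0.
  by move=> u nu; rewrite -dotmul dotC; apply: hM; exists u.
pose P := [set y | exists k, exists s, [/\ K k, 0 <= s & y = k - s *: z]].
have P0 : P 0 by exists 0, 0; split => //; [exact: K0 smK | rewrite scale0r subr0].
have cvP : convex_set P.
  move=> _ _ t [k1 [s1 [K1 s10 ->]]] [k2 [s2 [K2 s20 ->]]] t0 t1.
  exists (t *: k1 + (1 - t) *: k2), (t * s1 + (1 - t) * s2); split.
  - exact: (cvK smK).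
  - by apply: addr_ge0; apply: mulr_ge0 => //; lra.
  - by apply/matrixP => i j; rewrite !mxE; ring.
have coP : is_cone P.
  move=> _ t [k1 [s1 [K1 s10 ->]]] t0; exists (t *: k1), (t * s1); split.
  - exact: (Kscale smK).
  - exact: mulr_ge0.
  - by rewrite scalerBr scalerA.
have Ah : closure_pt P (A *m h).
  apply: contrapT => nAh.
  have [u [upos uc]] := sep (ex_intro _ 0 (sub_closure P0)) (@closure_closed _ _ P)
    (closure_convex cvP) (closure_cone coP P0) nAh.
  have nu : normal_cone K z u.
    split => // y Ky; apply: uc; apply: sub_closure.
    by exists y, 1; split => //; rewrite scale1r.
  by have := hu _ nu; lra.
have [r0 r00 hball] := ih0.
have key : forall e, 0 < e -> e <= 1 -> dot v (h + e *: (h0 - x)) <= 0.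
  move=> e e0 e1.
  have [p' [k' [s' [Kk' s'0 ep']]] hp'] := Ah (e * r0) (mulr_gt0 e0 r00).
  pose k1 := A *m h0 + b + e^-1 *: (A *m h - p').
  have Kk1 : K k1.
    apply: hball; rewrite /k1 addrAC subrr add0r enormZ ger0_norm; last by rewrite invr_ge0 ltW.
    by rewrite mulrC ltr_pdivrMr // mulrC.
  apply: (P_in_S hv Sx (k := k' + e *: k1) (s := s' + e)).
  - have en : e != 0 by rewrite gt_eqF.
    rewrite mulmxDr -scalemxAr mulmxBr /k1 ep'.
    by apply/matrixP => i j; rewrite !mxE; field.
  - by apply: (Kadd smK) => //; apply: (Kscale smK) => //; exact: ltW.
  - by apply: addr_ge0 => //; exact: ltW.
have := key 1 ltr01 (lexx 1); rewrite scale1r dotDr.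
rewrite dotC in hpos.
have [cn|cp] := ltP (dot v (h0 - x)) 0; last lra.
move=> _.
pose e := dot v h / (dot v h - dot v (h0 - x)).
have dp : 0 < dot v h - dot v (h0 - x) by lra.
have e0 : 0 < e by rewrite divr_gt0.
have e1 : e <= 1 by rewrite ler_pdivrMr // mul1r; lra.
have := key e e0 e1; rewrite dotDr dotZr.
have : dot v h + e * dot v (h0 - x) = dot v h * dot v h / (dot v h - dot v (h0 - x)).
  rewrite /e; field; by rewrite gt_eqF.
move=> -> hh.
have : 0 < dot v h * dot v h / (dot v h - dot v (h0 - x)).
  by apply: divr_gt0 => //; apply: mulr_gt0; lra.
lra.
Qed.

End ACQS.

Section EB.
Variables (R : realType) (m n : nat) (K : set 'cV[R]_m) (A : 'M[R]_(m, n)) (b : 'cV[R]_m).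
Hypothesis smK : smooth_cone K.

Lemma enorm_pos k (u : 'cV[R]_k) : u != 0 -> 0 < enorm u.
Proof.
move=> u0; rewrite lt_neqAle enorm_ge0 andbT eq_sym.
by apply: contra u0 => /eqP /enorm_eq0 ->.
Qed.

Lemma line_bound p d : K p -> K d -> d != 0 -> (forall s, 0 < s -> ~ K (p - s *: d)) ->
  exists2 c, 0 < c & forall s, 0 < s -> c * s <= dist (p - s *: d) K.
Proof.
move=> Kp Kd d0 nK.
have Kne := K_ne smK.
have [->|p0] := eqVneq p 0.
  exists (dist (- d) K).
    rewrite lt_neqAle dist_ge0 // andbT; apply/negP => /eqP e.
    have [q Kq hq] := nearest (- d) Kne (clK smK).
    move: e; rewrite (nearest_dist Kq hq) => /esym /enorm_eq0 /eqP.
    rewrite subr_eq0 => /eqP e; move/eqP: d0; apply.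
    by apply: (ptK smK) => //; rewrite e.
  move=> s s0; apply: dist_ge => // y Ky.
  have Ky' : K (s^-1 *: y) by apply: (Kscale smK) => //; rewrite invr_ge0 ltW.
  have h := dist_le (- d) Ky'.
  have -> : 0 - s *: d - y = s *: (- d - s^-1 *: y).
    by rewrite scalerBr scalerA mulfV ?gt_eqF // scale1r scalerN sub0r.
  by rewrite enormZ gtr0_norm // mulrC ler_pM2l.
have bp : boundary K p.
  apply: (not_int_bd Kp) => -[r r0 hb].
  have nd := enorm_pos d0.
  apply: (nK (r / (2 * enorm d))); first by rewrite divr_gt0 // mulr_gt0.
  apply: hb; rewrite addrAC subrr add0r enormN enormZ gtr0_norm; last by rewrite divr_gt0 // mulr_gt0.
  have dn : enorm d != 0 by rewrite gt_eqF.
  have -> : r / (2 * enorm d) * enorm d = r / 2 by field.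
  lra.
have [[nu nun nu0] _] := dim_at smK bp p0.
have [_ hK dp] := NK_cone smK nun.
have dnd : dot nu d < 0.
  rewrite lt_neqAle hK // andbT; apply/negP => /eqP dnd0.
  pose mid := (1/2) *: p + (1 - 1/2) *: d.
  have Km : K mid by apply: (cvK smK) => //; lra.
  have dm : dot nu mid = 0 by rewrite /mid dotDr !dotZr dp dnd0 !mulr0 addr0.
  have bm : boundary K mid.
    apply: (not_int_bd Km) => -[r r0 hb].
    have nn := enorm_pos nu0.
    have := hK (mid + (r / (2 * enorm nu)) *: nu).
    rewrite dotDr dotZr dm add0r -enorm_sq => h.
    have : 0 < r / (2 * enorm nu) * enorm nu ^+ 2 by rewrite mulr_gt0 ?divr_gt0 ?mulr_gt0 // exprn_gt0.
    suff : r / (2 * enorm nu) * enorm nu ^+ 2 <= 0 by lra.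
    apply: h; apply: hb; rewrite addrAC subrr add0r enormZ gtr0_norm; last by rewrite divr_gt0 // mulr_gt0.
    have dn : enorm nu != 0 by rewrite gt_eqF.
    have -> : r / (2 * enorm nu) * enorm nu = r / 2 by field.
    lra.
  have [g [[l l0 el] [l' l'0 el']]] := face_mid smK Kp Kd bm.
  have l'n : l' != 0 by apply: contraNneq d0 => e; rewrite -el' e scale0r.
  have ln : l != 0 by apply: contraNneq p0 => e; rewrite -el e scale0r.
  have mu0 : 0 < l / l' by rewrite divr_gt0 // lt_neqAle eq_sym ?ln ?l'n.
  apply: (nK (l / l')) => //.
  have -> : p - l / l' *: d = 0 by rewrite -el -el' scalerA divfK // subrr.
  exact: K0 smK.
have nn := enorm_pos nu0.
exists (- dot nu d / enorm nu); first by rewrite divr_gt0 //; lra.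
move=> s s0; apply: dist_ge => // y Ky.
have cs := CS nu (p - s *: d - y).
have e : dot nu (p - s *: d - y) = - dot nu y - s * dot nu d.
  by rewrite !dotBr dotZr dp; ring.
have hy := hK _ Ky.
rewrite mulrAC ler_pdivrMr //.
rewrite e mulrC in cs.
have : - dot nu d * s = - (s * dot nu d) by ring.
lra.
Qed.


Lemma EB_rank1 d : feas A b K !=set0 -> imA A d -> K d -> d != 0 -> \rank A = 1%N ->
  global_error_bound A b K.
Proof.
move=> Sne dA Kd d0 r1.
have Kne := K_ne smK.
have [xd _ exd] := dA.
pose g := A^T *m d.
have dd0 : 0 < dot d d by rewrite -enorm_sq exprn_gt0 // enorm_pos.
have Ax : forall x, A *m x = (dot g x / dot d d) *: d.
  move=> x; have [c ec] := rank1_span dA d0 r1 (imAx A x).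
  by rewrite ec /g dotmul ec dotZr mulfK ?gt_eqF.
have g0 : g != 0.
  apply/eqP => g00; have := dotmul A d xd; rewrite -/g g00 dot0l exd => e.
  by move: dd0; rewrite -e ltxx.
have ng := enorm_pos g0.
have [allT|/existsNP [tb ntb]] := pselect (forall t, K (b + t *: d)).
  exists 1 => // x; apply: le_trans (_ : _ <= 0) _; last first.
    by rewrite mul1r dist_ge0.
  have Sx : feas A b K x by rewrite /feas /= Ax addrC; exact: allT.
  by apply: le_trans (dist_le x Sx) _; rewrite subrr enorm0.
pose T := [set t | K (b + t *: d)].
have lbT : forall t, T t -> tb < t.
  move=> t Tt; rewrite ltNge; apply/negP => le; apply: ntb.
  have -> : b + tb *: d = (b + t *: d) + (tb - t) *: d.
    by apply/matrixP => i j; rewrite !mxE; ring.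
  apply: (Kadd smK) Tt _; apply: (Kscale smK) Kd _; lra.
have [x0 Sx0] := Sne.
have T0 : T !=set0.
  by exists (dot g x0 / dot d d); rewrite /T /= addrC -Ax.
have hiT : has_inf T by split => //; exists tb => t /lbT /ltW.
pose t1 := inf T.
have t1le : forall t, T t -> t1 <= t by move=> t Tt; exact: ge_inf (proj2 hiT) _ Tt.
have Tt1 : T t1.
  apply: (clK smK) => e e0.
  have e' : 0 < e / (enorm d + 1) by rewrite divr_gt0 // ltr_pwDr ?enorm_ge0.
  have [t Tt ht] := inf_adherent e' hiT.
  exists (b + t *: d) => //.
  have -> : b + t1 *: d - (b + t *: d) = (t1 - t) *: d.
    by apply/matrixP => i j; rewrite !mxE; ring.
  rewrite enormZ ler0_norm; last by have := t1le _ Tt; lra.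
  have nd := enorm_ge0 d.
  have nd1 : 0 < enorm d + 1 by lra.
  have tt : 0 <= t - t1 by have := t1le _ Tt; lra.
  have h2 : (t - t1) * (enorm d + 1) < e by rewrite -ltr_pdivlMr //; rewrite -/t1 in ht; lra.
  have h3 : (t - t1) * enorm d <= (t - t1) * (enorm d + 1) by rewrite ler_wpM2l // lerDl.
  have : - (t1 - t) * enorm d = (t - t1) * enorm d by ring.
  lra.
pose p := b + t1 *: d.
have Kp : K p := Tt1.
have nK : forall s, 0 < s -> ~ K (p - s *: d).
  move=> s s0 Ks.
  have : T (t1 - s).
    rewrite /T /=; have -> : b + (t1 - s) *: d = p - s *: d.
      by rewrite /p; apply/matrixP => i j; rewrite !mxE; ring.
    exact: Ks.
  move/t1le; lra.
have [c c0 hc] := line_bound Kp Kd d0 nK.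
have al0 : 0 < dot d d / (enorm g * c) by rewrite divr_gt0 // mulr_gt0.
exists (dot d d / (enorm g * c)) => // x.
pose phi := dot g x / dot d d.
have eAx : A *m x + b = b + phi *: d by rewrite Ax addrC.
have [le|lt] := lerP t1 phi.
  have Sx : feas A b K x.
    rewrite /feas /= eAx.
    have -> : b + phi *: d = p + (phi - t1) *: d.
      by rewrite /p; apply/matrixP => i j; rewrite !mxE; ring.
    apply: (Kadd smK) Kp _; apply: (Kscale smK) Kd _; lra.
  apply: le_trans (dist_le x Sx) _; rewrite subrr enorm0.
  by apply: mulr_ge0; [exact: ltW | exact: dist_ge0].
pose s := t1 - phi.
have s0 : 0 < s by rewrite /s; lra.
have gg : 0 < dot g g by rewrite -enorm_sq exprn_gt0.
pose x' := x + (s * dot d d / dot g g) *: g.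
have Sx' : feas A b K x'.
  rewrite /feas /= Ax /x' dotDr dotZr.
  have -> : (dot g x + s * dot d d / dot g g * dot g g) / dot d d = t1.
    rewrite divfK ?gt_eqF // mulrDl mulfK ?gt_eqF // -/phi /s; ring.
  by rewrite addrC.
have h1 := dist_le x Sx'.
have ex' : x - x' = - ((s * dot d d / dot g g) *: g) by rewrite /x' opprD addNKr.
have sg : 0 <= s * dot d d / dot g g by rewrite divr_ge0 ?mulr_ge0 // ltW.
rewrite ex' enormN enormZ ger0_norm // in h1.
have e1 : A *m x + b = p - s *: d.
  by rewrite eAx /p /s; apply/matrixP => i j; rewrite !mxE; ring.
have h2 := hc s s0; rewrite -e1 in h2.
apply: le_trans h1 _.
have e2 : s * dot d d / dot g g * enorm g = dot d d / (enorm g * c) * (c * s).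
  have gn : enorm g != 0 by rewrite gt_eqF.
  have cn : c != 0 by rewrite gt_eqF.
  by rewrite -(enorm_sq g); field; rewrite cn gn.
rewrite e2; apply: ler_wpM2l => //; exact: ltW.
Qed.

End EB.

Unset Implicit Arguments.

Theorem theorem5 (R : realType) (m n : nat) (K : set 'cV[R]_m)
  (A : 'M[R]_(m, n)) (b : 'cV[R]_m) :
  smooth_cone K ->
  feas A b K !=set0 ->
  (exists2 y, (imA A `&` K) y & y != 0) ->
  imA A `&` K `<=` boundary K ->
  [/\ (\rank A != 1%N -> imA A b -> ~ ACQ A b K /\ ~ global_error_bound A b K),
      (\rank A != 1%N -> ~ imA A b -> ACQ A b K /\ ~ global_error_bound A b K) &
      (\rank A = 1%N -> global_error_bound A b K)].
Proof.
move=> smK Sne [d [dA Kd] d0] hbd; split.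
- move=> r1 bA; have [w [wA w0 wd]] := get_w dA d0 r1; split.
    exact: (noACQ smK hbd bA dA Kd d0 wA w0 wd).
  exact: (noEB smK Sne hbd dA Kd d0 wA w0 wd).
- move=> r1 nb; have [w [wA w0 wd]] := get_w dA d0 r1; split.
    exact: (ACQ_holds smK Sne nb dA Kd d0).
  exact: (noEB smK Sne hbd dA Kd d0 wA w0 wd).
- move=> r1; exact: (EB_rank1 smK Sne dA Kd d0 r1).
Qed.
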